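(* For all $A,B\in\mathcal A_n(\Bbbk)$ one has $\varphi(A)\,\varphi(B)=\varphi(AB)$ in $A_n(\Bbbk)$; i.e. $\varphi:\mathcal A_n(\Bbbk)\to A_n(\Bbbk)$ is a monoid homomorphism (from matrix multiplication to multiplication in $A_n(\Bbbk)$).
   Context: Let $\Bbbk$ be a field of characteristic zero and $h$ a formal variable. $A_n(\Bbbk)$ denotes the $n$-th Weyl–Heisenberg algebra over $\Bbbk\llbracket h\rrbracket$ ($h$-adically completed), generated by $\mathbf{x}_i,\mathbf{p}_i$ ($1\le i\le n$) with $[\mathbf{x}_i,\mathbf{x}_j]=[\mathbf{p}_i,\mathbf{p}_j]=0$, $[\mathbf{p}_i,\mathbf{x}_j]=\delta_{ij}$. The normal ordering map $\mathcal N$ is the $\Bbbk\llbracket h\rrbracket$-linear, $h$-adically continuous map from the commutative ring $\Bbbk\llbracket h\rrbracket[x_1,\dots,x_n,p_1,\dots,p_n]$ (completed) to $A_n(\Bbbk)$ sending $\prod_i x_i^{\alpha_i}p_i^{\beta_i}\mapsto(\prod_i\mathbf{x}_i^{\alpha_i})(\prod_j\mathbf{p}_j^{\beta_j})$. Let $\mathcal A_n(\Bbbk):=\{\exp(hX):X\in\mathrm{Mat}_n(\Bbbk\llbracket h\rrbracket)\}$, a monoid under matrix multiplication, and define $\varphi:\mathcal A_n(\Bbbk)\to A_n(\Bbbk)$ by $\varphi(A)=\mathcal N\big(\exp(x^{\top}(A-\mathbf 1)p)\big)$, where $x^{\top}(A-\mathbf1)p=\sum_{k,l}x_k(A-\mathbf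 1)_{kl}p_l$. *)

(* Defs.v *)
From HB Require Import structures.
From mathcomp Require Import all_boot all_order all_algebra.
From mathcomp Require Import mpoly.
Set Implicit Arguments. Unset Strict Implicit. Unset Printing Implicit Defensive.
Import GRing.Theory.
Local Open Scope ring_scope.

(* Formal power series in h with coefficients in R, R[[h]], represented by  *)
(* their coefficient sequence: f = \sum_m h^m (f m).                         *)
Definition hps (R : Type) := nat -> R.

Definition hps_mul (R : pzSemiRingType) (f g : hps R) : hps R :=
  fun m => \sum_(i < m.+1) f i * g (m - i)%N.

Definition hps_one (R : pzSemiRingType) : hps R := fun m => if m == 0%N then 1 else 0.

Fixpoint hps_pow (R : pzSemiRingType) (f : hps R) (j : nat) : hps R :=
  if j is j'.+1 then hps_mul f (hps_pow f j') else hps_one R.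

Definition hps_h (R : pzSemiRingType) (f : hps R) : hps R :=
  fun m => if m is m'.+1 then f m' else 0.

(* h-adic exponential exp(f) = \sum_j f^j / j!, for f with zero constant     *)
(* term (f 0 = 0); then (f^j) m = 0 for j > m, so the coefficient of h^m is  *)
(* the finite sum below.  Scalars 1/j! are taken in the base field K and act *)
(* on R through the K-scalar multiplication [scal] of R (always instantiated *)
(* below with the library's *:, R being a K-algebra).                        *)
Definition hps_exp (K : fieldType) (R : pzSemiRingType) (scal : K -> R -> R)
    (f : hps R) : hps R :=
  fun m => \sum_(j < m.+1) scal (j`!%:R)^-1 (hps_pow f j m).

(* Matrices over k[[h]]: Mat_n(k[[h]]) = (Mat_n(k))[[h]].                    *)
Definition hmat (k : fieldType) (n : nat) := hps 'M[k]_n.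

Definition exph (k : fieldType) (n : nat) (X : hmat k n) : hmat k n :=
  @hps_exp k 'M[k]_n (fun c M => c *: M) (@hps_h 'M[k]_n X).

Definition calA (k : fieldType) (n : nat) (A : hmat k n) : Prop :=
  exists X : hmat k n, A = exph X.

(* The commutative ring k[x_1..x_n,p_1..p_n] = {mpoly k[n + n]}, with       *)
(* x_i = 'X_(lshift n i) and p_i = 'X_(rshift n i); its h-adic completion   *)
(* k[[h]][x,p]^ is hps {mpoly k[n+n]}.                                       *)
Definition xvar (k : fieldType) (n : nat) (i : 'I_n) : {mpoly k[n + n]} :=
  'X_(lshift n i).
Definition pvar (k : fieldType) (n : nat) (i : 'I_n) : {mpoly k[n + n]} :=
  'X_(rshift n i).

Definition xCp (k : fieldType) (n : nat) (C : hmat k n) : hps {mpoly k[n + n]} :=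
  fun m => \sum_(i < n) \sum_(j < n) (C m i j) *: (xvar k i * pvar k j).

Definition hmat_sub1 (k : fieldType) (n : nat) (A : hmat k n) : hmat k n :=
  fun m => A m - hps_one 'M[k]_n m.

(* The Weyl algebra A_n(k) over k[[h]] (h-adically completed).  In          *)
(* characteristic zero the Weyl algebra over k is (faithfully) the algebra  *)
(* of polynomial differential operators on k[x_1..x_n], with x_i acting by  *)
(* multiplication and p_i by d/dx_i (so [p_i, x_j] = delta_ij).  Its        *)
(* h-adic completion over k[[h]] consists of series \sum_m h^m D_m, which   *)
(* we represent by the sequence (D_m) of operators; multiplication is the   *)
(* Cauchy product of compositions.                                          *)
Definition diffop (k : fieldType) (n : nat) := {mpoly k[n]} -> {mpoly k[n]}.

Definition weyl (k : fieldType) (n : nat) := hps (diffop k n).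

Definition weyl_mul (k : fieldType) (n : nat) (a b : weyl k n) : weyl k n :=
  fun m f => \sum_(i < m.+1) a i (b (m - i)%N f).

Definition xpart (n : nat) (m : 'X_{1.. n + n}) : 'X_{1.. n} :=
  [multinom m (lshift n i) | i < n].
Definition ppart (n : nat) (m : 'X_{1.. n + n}) : 'X_{1.. n} :=
  [multinom m (rshift n i) | i < n].

Definition normal_ord (k : fieldType) (n : nat) (P : {mpoly k[n + n]}) : diffop k n :=
  fun f => \sum_(m <- msupp P) P@_m *: ('X_[xpart m] * mderivm (ppart m) f).

Definition Nh (k : fieldType) (n : nat) (P : hps {mpoly k[n + n]}) : weyl k n :=
  fun m => normal_ord (P m).

Definition phi (k : fieldType) (n : nat) (A : hmat k n) : weyl k n :=
  Nh (@hps_exp k {mpoly k[n + n]} (fun c P => c *: P) (xCp (hmat_sub1 A))).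

(* Main.v *)
Require Import Defs.
From HB Require Import structures.
From mathcomp Require Import all_boot all_order all_algebra.
From mathcomp Require Import mpoly ssrcomplements zify.
Import GRing.Theory.
Local Open Scope ring_scope.

Section NO.
Variables (k : fieldType) (n : nat).
Implicit Types (P Q : {mpoly k[n + n]}) (f : {mpoly k[n]}).

Definition nmono (m : 'X_{1.. (n + n)}) (f : {mpoly k[n]}) : {mpoly k[n]} :=
  'X_[xpart m] * mderivm (ppart m) f.

Lemma normal_ord_wE (P : {mpoly k[n + n]}) f i : (msize P <= i)%N ->
  normal_ord P f = \sum_(m : 'X_{1.. (n + n) < i}) P@_m *: nmono m f.
Proof.
pose I : subFinType _ := 'X_{1.. (n + n) < i}.
move=> le_pk; rewrite /normal_ord (big_mksub I) /=; first last.
  by move=> x /msize_mdeg_lt/leq_trans/(_ le_pk).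
  by rewrite msupp_uniq.
rewrite big_rmcond //= => j /memN_msupp_eq0 ->.
by rewrite scale0r.
Qed.

Lemma normal_ordD P Q f : normal_ord (P + Q) f = normal_ord P f + normal_ord Q f.
Proof.
set i := (msize P + msize Q + msize (P + Q))%N.
rewrite !(@normal_ord_wE _ _ i) /i ?leq_addl //; last first.
  by rewrite -addnA leq_addr.
  by rewrite (addnC (msize P)) -addnA leq_addr.
rewrite -big_split /=; apply: eq_bigr => m _.
by rewrite mcoeffD scalerDl.
Qed.

Lemma normal_ordZ c P f : normal_ord (c *: P) f = c *: normal_ord P f.
Proof.
set i := (msize P + msize (c *: P))%N.
rewrite !(@normal_ord_wE _ _ i) /i ?leq_addl ?leq_addr //.
rewrite scaler_sumr; apply: eq_bigr => m _.
by rewrite mcoeffZ scalerA.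
Qed.

Lemma normal_ord0 f : normal_ord 0 f = 0.
Proof. by rewrite /normal_ord msupp0 big_nil. Qed.

Lemma normal_ord_sum (I : Type) (r : seq I) (F : I -> {mpoly k[n + n]}) f :
  normal_ord (\sum_(i <- r) F i) f = \sum_(i <- r) normal_ord (F i) f.
Proof.
elim: r => [|a r IH]; first by rewrite !big_nil normal_ord0.
by rewrite !big_cons normal_ordD IH.
Qed.

Lemma normal_ordMn P j f : normal_ord (P *+ j) f = normal_ord P f *+ j.
Proof.
elim: j => [|j IH]; first by rewrite !mulr0n normal_ord0.
by rewrite !mulrS normal_ordD IH.
Qed.

Lemma normal_ordX m f : normal_ord 'X_[m] f = nmono m f.
Proof. by rewrite /normal_ord msuppX big_seq1 mcoeffX eqxx scale1r. Qed.

Lemma normal_ord1 f : normal_ord 1 f = f.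
Proof.
rewrite -mpolyX0 normal_ordX /nmono.
have -> : xpart (0%MM : 'X_{1.. (n + n)}) = 0%MM.
  by apply/mnmP => i; rewrite mnmE !mnm0E.
have -> : ppart (0%MM : 'X_{1.. (n + n)}) = 0%MM.
  by apply/mnmP => i; rewrite mnmE !mnm0E.
by rewrite mpolyX0 mul1r mderivm0m.
Qed.

Lemma xpartD (m1 m2 : 'X_{1.. (n + n)}) : xpart (m1 + m2)%MM = (xpart m1 + xpart m2)%MM.
Proof. by apply/mnmP => i; by rewrite !mnmE. Qed.
Lemma ppartD (m1 m2 : 'X_{1.. (n + n)}) : ppart (m1 + m2)%MM = (ppart m1 + ppart m2)%MM.
Proof. by apply/mnmP => i; by rewrite !mnmE. Qed.

Lemma xpart_l (a : 'I_n) : xpart (U_(lshift n a))%MM = U_(a)%MM.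
Proof.
by apply/mnmP => i; rewrite mnmE !mnm1E (inj_eq (@lshift_inj _ _)).
Qed.
Lemma ppart_l (a : 'I_n) : ppart (U_(lshift n a))%MM = 0%MM.
Proof.
apply/mnmP => i; rewrite mnmE !mnm1E mnm0E.
by case: eqP => // /eqP; rewrite eq_lrshift.
Qed.
Lemma xpart_r (a : 'I_n) : xpart (U_(rshift n a))%MM = 0%MM.
Proof.
apply/mnmP => i; rewrite mnmE !mnm1E mnm0E.
by case: eqP => // /eqP; rewrite eq_rlshift.
Qed.
Lemma ppart_r (a : 'I_n) : ppart (U_(rshift n a))%MM = U_(a)%MM.
Proof.
by apply/mnmP => i; rewrite mnmE !mnm1E (inj_eq (@rshift_inj _ _)).
Qed.

Lemma mp_scalerAr (c : k) (p q : {mpoly k[n]}) : p * (c *: q) = c *: (p * q).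
Proof. by rewrite -(mul_mpolyC c q) -(mul_mpolyC c (p * q)) mulrCA. Qed.

Lemma normal_ord_xp (a b : 'I_n) Q f :
  normal_ord (xvar k a * pvar k b * Q) f = 'X_a * normal_ord Q (mderiv b f).
Proof.
rewrite [Q]mpolyE mulr_sumr !normal_ord_sum mulr_sumr; apply: eq_bigr => m _.
rewrite -!mul_mpolyC mulrCA (mul_mpolyC (Q@_m) (_ * _ * _)) (mul_mpolyC (Q@_m) 'X_[m]) !normal_ordZ.
rewrite mp_scalerAr; congr (_ *: _).
rewrite /xvar /pvar -!mpolyXD !normal_ordX /nmono !xpartD !ppartD.
rewrite xpart_l xpart_r ppart_l ppart_r !add0m addm0 mpolyXD mulrA.
by rewrite mderivmDm mderivmU1m.
Qed.

End NO.
Section Exp.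
Variables (K : fieldType) (R : comAlgType K).
Hypothesis char0 : [pchar K] =i pred0.
Variable u : hps R.
Hypothesis u0 : u 0%N = 0.

Let E := @hps_exp K R (fun c P => c *: P) u.
Let Up M : {poly R} := \poly_(i < M.+1) u i.
Let a j : R := ((j`!)%:R^-1 : K)%:A.

Lemma natK_neq0 m : (0 < m)%N -> (m%:R : K) != 0.
Proof. by move=> m0; move/pcharf0P: char0 => ->; rewrite -lt0n. Qed.

Lemma pow_coef M j s : (s <= M)%N -> hps_pow u j s = (Up M ^+ j)`_s.
Proof.
elim: j s => [|j IH] s sM /=; first by rewrite expr0 coef1 /hps_one; case: (s == 0%N).
rewrite exprS coefM /hps_mul; apply: eq_bigr => i _.
rewrite IH; last by rewrite (leq_trans (leq_subr _ _) sM).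
rewrite coef_poly ltnS (leq_trans _ sM) // -ltnS ltn_ord //.
Qed.

Lemma pow_low M j s : (s < j)%N -> (Up M ^+ j)`_s = 0.
Proof.
elim: j s => [|j IH] s //= sj.
rewrite exprS coefM big1 // => -[i /= ilt] _.
case: i ilt => [|i] ilt; first by rewrite coef_poly /= u0 ?if_same mul0r.
rewrite IH ?mulr0 //; rewrite ltnS in sj; rewrite ltnS in ilt.
lia.
Qed.

Let Ep M L : {poly R} := \sum_(j < L) (a j)%:P * Up M ^+ j.

Lemma Ep_coef M L s : (s <= M)%N -> (s < L)%N -> (Ep M L)`_s = E s.
Proof.
move=> sM sL; rewrite /Ep /E /hps_exp coef_sum.
rewrite (big_ord_widen L (fun j => ((j`!)%:R^-1 : K) *: hps_pow u j s) sL).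
rewrite [RHS]big_mkcond /=; apply: eq_bigr => j _.
rewrite coefCM; case: ifP => js.
  by rewrite (pow_coef _ _ _ sM) /a mulr_algl.
by rewrite pow_low ?mulr0 // ltnNge -ltnS js.
Qed.

Lemma a_rec j : a j.+1 *+ j.+1 = a j.
Proof.
rewrite /a scalerMnl; congr (_ *: _).
rewrite factS natrM invfM -mulr_natr mulrAC mulVf ?mul1r //.
exact: natK_neq0.
Qed.

Lemma Ep_deriv M L : (Ep M L.+1)^`() = (Up M)^`() * Ep M L.
Proof.
rewrite /Ep raddf_sum big_ord_recl /= expr0 mulr1 derivC add0r mulr_sumr.
apply: eq_bigr => j _; rewrite /bump /= add1n.
rewrite derivE deriv_exp /= -(a_rec j) polyCMn mulrnAl !mulrnAr.
by rewrite mulrCA.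
Qed.

Lemma exp_rec r :
  E r.+1 *+ r.+1 = \sum_(i < r.+1) (u i.+1 *+ i.+1) * E (r - i)%N.
Proof.
rewrite -(@Ep_coef r.+1 r.+2) // -coef_deriv Ep_deriv coefM.
apply: eq_bigr => -[i /= ilt] _.
rewrite coef_deriv coef_poly ltnS ilt (@Ep_coef r.+1) //.
  by rewrite (leq_trans (leq_subr _ _)).
by rewrite ltnS leq_subr.
Qed.

End Exp.

Section Trec.
Variables (k : fieldType) (n : nat).
Hypothesis char0 : [pchar k] =i pred0.

Definition Yc (A : hmat k n) (i : nat) (l : 'I_n) : {mpoly k[n]} :=
  \sum_(t < n) A i t l *: 'X_t.

Lemma mp_scalerAl (c : k) (p q : {mpoly k[n]}) : (c *: p) * q = c *: (p * q).
Proof. by rewrite -(mul_mpolyC c p) -(mul_mpolyC c (p * q)) mulrA. Qed.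

Lemma mp_scalerAl2 (c : k) (p q : {mpoly k[n + n]}) : (c *: p) * q = c *: (p * q).
Proof. by rewrite -(mul_mpolyC c p) -(mul_mpolyC c (p * q)) mulrA. Qed.

Lemma xCp0 (A : hmat k n) : A 0%N = 1 -> xCp (hmat_sub1 A) 0%N = 0.
Proof.
move=> A0; rewrite /xCp big1 // => i _; rewrite big1 // => j _.
by rewrite /hmat_sub1 A0 /hps_one /= subrr mxE scale0r.
Qed.

Lemma T_rec (A : hmat k n) : A 0%N = 1 -> forall r f,
  phi A r.+1 f *+ r.+1 =
  \sum_(i < r.+1) \sum_(l < n) (Yc A i.+1 l *+ i.+1) * phi A (r - i)%N (f^`M(l)).
Proof.
move=> A0 r f; rewrite /phi /Nh -normal_ordMn.
rewrite (@exp_rec _ _ char0 _ (xCp0 _ A0)) normal_ord_sum; apply: eq_bigr => i _.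
rewrite mulrnAl normal_ordMn.
under [RHS]eq_bigr do rewrite mulrnAl.
rewrite sumrMnl; congr (_ *+ _).
rewrite /xCp mulr_suml normal_ord_sum.
under eq_bigr do rewrite mulr_suml normal_ord_sum.
rewrite exchange_big /=; apply: eq_bigr => l _.
rewrite /Yc mulr_suml; apply: eq_bigr => t _.
rewrite mp_scalerAl2 normal_ordZ normal_ord_xp mp_scalerAl.
by rewrite /hmat_sub1 /hps_one /= subr0.
Qed.

End Trec.
Arguments Yc {k n}.

Lemma auxCRM (R : comNzRingType) (a b c d e : R) :
  (a * b) * c + d * (a * e) = a * (b * c) + a * (d * e).
Proof. by rewrite !mulrA [d * a]mulrC. Qed.

Lemma auxCRZ (R : comNzRingType) (a b c : R) : a * (b * c) = b * (a * c).
Proof. by rewrite mulrCA. Qed.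

Section Chain.
Variables (k : fieldType) (n : nat).

Definition io : {rmorphism k -> {poly {mpoly k[n]}}} := polyC \o (@mpolyC n k).

Variable y : 'I_n -> {poly {mpoly k[n]}}.

Lemma SD f g : mmap io y (f + g) = mmap io y f + mmap io y g.
Proof. exact: mmapD. Qed.
Lemma SM f g : mmap io y (f * g) = mmap io y f * mmap io y g.
Proof. exact: rmorphM. Qed.
Lemma S1 : mmap io y 1 = 1.
Proof. exact: rmorph1. Qed.
Lemma S0 : mmap io y 0 = 0.
Proof. exact: mmap0. Qed.

Definition CR (f : {mpoly k[n]}) :=
  (mmap io y f)^`() = \sum_(l < n) (y l)^`() * mmap io y (f^`M(l)).

Lemma CR0 : CR 0.
Proof.
rewrite /CR S0 big1 ?raddf0 // => l _.
by rewrite mderiv0 S0 mulr0.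
Qed.

Lemma CRD f g : CR f -> CR g -> CR (f + g).
Proof.
rewrite /CR => Hf Hg; rewrite SD derivD [X in X + _ = _]Hf [X in _ + X = _]Hg -big_split /=.
by apply: eq_bigr => l _; rewrite mderivD SD mulrDr.
Qed.

Lemma CR1 : CR 1.
Proof.
rewrite /CR S1 -[1]/(1%:P) derivC big1 // => l _.
by rewrite -mpolyC1 mderivC S0 mulr0.
Qed.

Lemma CRM f g : CR f -> CR g -> CR (f * g).
Proof.
rewrite /CR => Hf Hg; rewrite SM derivM [X in X * _ + _ = _]Hf [X in _ + _ * X = _]Hg.
rewrite mulr_suml mulr_sumr -big_split /=.
apply: eq_bigr => l _; rewrite mderivM SD !SM mulrDr.
exact: auxCRM.
Qed.

Lemma CRZ c f : CR f -> CR (c *: f).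
Proof.
rewrite /CR => Hf; rewrite mmapZ /= deriv_mulC [X in _ * X = _]Hf mulr_sumr.
by apply: eq_bigr => l _; rewrite mderivZ mmapZ /=; apply: auxCRZ.
Qed.

Lemma CRX i : CR 'X_i.
Proof.
rewrite /CR mmapX mmap1U (bigD1 i) //= big1 ?addr0.
  rewrite mderivX mnm1E eqxx /=.
  have -> : (U_(i) - U_(i))%MM = 0%MM.
    by apply/mnmP => j; rewrite mnmBE subnn mnm0E.
  by rewrite scale1r mpolyX0 S1 mulr1.
move=> l /negbTE il; rewrite mderivX mnm1E eq_sym il scale0r S0 mulr0 //.
Qed.

Lemma CR_all f : CR f.
Proof.
rewrite [f]mpolyE; apply: (big_ind CR CR0 CRD) => m _.
apply: CRZ; rewrite mpolyXE_id.
apply: (big_ind CR CR1 CRM) => i _.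
elim: (m i) => [|e IH]; first by rewrite expr0; exact: CR1.
rewrite exprS; apply: CRM; [exact: CRX | exact: IH].
Qed.

End Chain.
Arguments io {k n}.

Lemma mmap_comp (n : nat) (R S T : comNzRingType) (f : {rmorphism R -> S})
   (g : {rmorphism S -> T}) (h : 'I_n -> S) (p : {mpoly R[n]}) :
  g (mmap f h p) = mmap (g \o f) (g \o h) p.
Proof.
rewrite /mmap rmorph_sum; apply: eq_bigr => m _.
rewrite rmorphM /mmap1 rmorph_prod; congr (_ * _); apply: eq_bigr => i _.
by rewrite rmorphXn.
Qed.

Section Main.
Variables (k : fieldType) (n : nat).
Hypothesis char0 : [pchar k] =i pred0.

Definition yv (A : hmat k n) (M : nat) (l : 'I_n) : {poly {mpoly k[n]}} :=
  \poly_(i < M.+1) Yc A i l.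

Lemma S_rec A M r f : (r < M)%N ->
  (mmap io (yv A M) f)`_r.+1 *+ r.+1 =
  \sum_(i < r.+1) \sum_(l < n) (Yc A i.+1 l *+ i.+1) * (mmap io (yv A M) (f^`M(l)))`_(r - i).
Proof.
move=> rM; rewrite -coef_deriv.
rewrite [in LHS](@CR_all k n (yv A M) f) coef_sum.
under eq_bigr do rewrite coefM.
rewrite exchange_big /=.
apply: eq_bigr => -[i /= ilt] _; apply: eq_bigr => l _.
congr (_ * _).
rewrite coef_deriv coef_poly ltnS.
have -> : (i < M)%N by apply: leq_ltn_trans rM; rewrite -ltnS.
reflexivity.
Qed.

Lemma S0coef A M f : A 0%N = 1 -> (mmap io (yv A M) f)`_0 = f.
Proof.
move=> A0; rewrite -horner_coef0 -horner_evalE mmap_comp.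
rewrite [RHS]mpolyE /mmap; apply: eq_bigr => m _.
rewrite /= horner_evalE hornerC mul_mpolyC; congr (_ *: _).
rewrite (mmap1_eq (f2 := fun i => 'X_i)) ?mmap1_id // => i /=.
rewrite horner_evalE horner_coef0 coef_poly /= /Yc A0 (bigD1 i) //= -idmxE mxE eqxx scale1r.
rewrite big1 ?addr0 // => t /negbTE ti; rewrite mxE ti scale0r //.
Qed.

Lemma mp_natmulI (x z : {mpoly k[n]}) m : x *+ m.+1 = z *+ m.+1 -> x = z.
Proof.
rewrite -!scaler_nat => /scalerI; apply.
exact: natK_neq0.
Qed.

Lemma phi0 (A : hmat k n) f : phi A 0%N f = f.
Proof.
rewrite /phi /Nh /hps_exp big_ord1 /= /hps_one /= invr1 scale1r.
exact: normal_ord1.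
Qed.

Lemma main_lemma (A : hmat k n) : A 0%N = 1 -> forall M r f, (r <= M)%N ->
  phi A r f = (mmap io (yv A M) f)`_r.
Proof.
move=> A0 M; elim/ltn_ind => r IH f rM.
case: r IH rM => [|r] IH rM.
  by rewrite phi0 (S0coef _ _ _ A0).
apply: (@mp_natmulI _ _ r).
rewrite (@T_rec k n char0 A A0) (S_rec _ _ _ _ rM).
apply: eq_bigr => -[i /= ilt] _; apply: eq_bigr => l _.
congr (_ * _); apply: IH.
  by rewrite ltnS leq_subr.
by apply: leq_trans (leq_subr _ _) (ltnW rM).
Qed.

End Main.
Arguments yv {k n}.

Section Eqm.
Variable R : comNzRingType.
Definition eqm (M : nat) (P Q : {poly R}) := forall r, (r <= M)%N -> P`_r = Q`_r.

Lemma eqm_mul M P P' Q Q' : eqm M P P' -> eqm M Q Q' -> eqm M (P * Q) (P' * Q').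
Proof.
move=> HP HQ r rM; rewrite !coefM; apply: eq_bigr => -[i /= ilt] _.
rewrite HP ?HQ //; first by apply: leq_trans (leq_subr _ _) rM.
by apply: leq_trans rM; rewrite -ltnS.
Qed.

Lemma eqm_mmap n (K : nzRingType) (f1 f2 : {rmorphism K -> {poly R}})
  (h1 h2 : 'I_n -> {poly R}) M (p : {mpoly K[n]}) :
  (forall c, f1 c = f2 c) -> (forall l, eqm M (h1 l) (h2 l)) ->
  eqm M (mmap f1 h1 p) (mmap f2 h2 p).
Proof.
move=> Hf Hh r rM; rewrite /mmap !coef_sum; apply: eq_bigr => m _.
rewrite Hf; apply: eqm_mul; first by move=> ? ?.
rewrite /mmap1; apply: (big_ind2 (eqm M)); first by move=> ? ?.
  by move=> ? ? ? ?; apply: eqm_mul.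
move=> i _; elim: (m i) => [|e IH]; first by move=> s _; rewrite !expr0.
by rewrite !exprS; apply: eqm_mul.
exact: rM.
Qed.
End Eqm.
Arguments eqm {R}.

Section Comp.
Variables (k : fieldType) (n : nat) (A B : hmat k n) (m : nat).

Definition SA : {rmorphism {mpoly k[n]} -> {poly {mpoly k[n]}}} := mmap io (yv A m).

Lemma cfu : commr_rmorph SA 'X.
Proof. by move=> a; apply: mulrC. Qed.

Definition gh := horner_morph cfu.

Lemma hat_coef G r : (gh G)`_r = \sum_(i < r.+1) (SA (G`_(r - i)))`_i.
Proof.
rewrite /gh /horner_morph (@horner_coef_wide _ (size G + r.+1)); last first.
  exact: leq_trans (size_poly _ _) (leq_addr _ _).
rewrite coef_sum.
under eq_bigr do rewrite coefMXn coef_map.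
have -> : \sum_(i < r.+1) (SA G`_(r - i))`_i = \sum_(i < r.+1) (SA G`_i)`_(r - i).
  rewrite (reindex_inj rev_ord_inj); apply: eq_bigr => -[i /= ilt] _.
  by rewrite subSS subKn // -ltnS.
rewrite (big_ord_widen (size G + r.+1)
   (fun j => (SA G`_j)`_(r - j)) (leq_addl _ _)).
rewrite [RHS]big_mkcond /=; apply: eq_bigr => -[j /= jlt] _.
by rewrite ltnS; case: (leqP j r).
Qed.

Lemma g_io c : gh (io c) = io c.
Proof. rewrite /gh /horner_morph /= map_polyC hornerC; exact: mmapC. Qed.

Lemma SA_Yc (Bm : 'M[k]_n) l :
  SA (\sum_(t < n) Bm t l *: 'X_t) = \sum_(t < n) io (Bm t l) * yv A m t.
Proof.
rewrite /SA raddf_sum; apply: eq_bigr => t _.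
transitivity (mmap io (yv A m) (Bm t l *: 'X_t)); first reflexivity.
by rewrite mmapZ mmapX mmap1U.
Qed.

Lemma Yc_mul r l : Yc (hps_mul A B) r l =
  \sum_(i < r.+1) \sum_(t < n) B (r - i)%N t l *: Yc A i t.
Proof.
rewrite /Yc /hps_mul.
under eq_bigr => s _ do rewrite summxE scaler_suml.
rewrite exchange_big; apply: eq_bigr => i _.
under eq_bigr => s _ do rewrite -mulmxE mxE scaler_suml.
rewrite exchange_big; apply: eq_bigr => t _.
rewrite scaler_sumr; apply: eq_bigr => s _.
by rewrite scalerA mulrC.
Qed.

Lemma g_yB l : eqm m (gh (yv B m l)) (yv (hps_mul A B) m l).
Proof.
move=> r rm; rewrite hat_coef coef_poly ltnS rm Yc_mul.
apply: eq_bigr => -[i /= ilt] _.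
rewrite coef_poly ltnS (leq_trans (leq_subr _ _) rm) SA_Yc coef_sum.
apply: eq_bigr => t _.
have im : (i <= m)%N by apply: leq_trans rm; rewrite -ltnS.
by rewrite /= coefCM coef_poly ltnS im mul_mpolyC.
Qed.

End Comp.
Arguments SA {k n}.
Arguments gh {k n}.

Lemma calA0 (k : fieldType) n (A : hmat k n) : calA A -> A 0%N = 1.
Proof.
case=> X ->; rewrite /exph /hps_exp big_ord1 /= /hps_one /= invr1 scale1r //.
Qed.

From Stdlib Require Import FunctionalExtensionality.

Theorem theorem3p10 (k : fieldType) (n : nat)
    (char0 : [pchar k] =i pred0) (A B : hmat k n) :
  calA A -> calA B ->
  weyl_mul (phi A) (phi B) = phi (hps_mul A B).
Proof.
move=> cA cB; have A0 := @calA0 k n A cA; have B0 := @calA0 k n B cB.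
have AB0 : hps_mul A B 0%N = 1.
  by rewrite /hps_mul big_ord1 /= A0 B0 mul1r.
apply: functional_extensionality => m; apply: functional_extensionality => f.
rewrite /weyl_mul.
transitivity (\sum_(i < m.+1) (SA A m ((mmap io (yv B m) f)`_(m - i)))`_i).
  apply: eq_bigr => -[i /= ilt] _.
  rewrite (@main_lemma k n char0 B B0 m); last exact: leq_subr.
  rewrite (@main_lemma k n char0 A A0 m); last by rewrite -ltnS.
  reflexivity.
rewrite -(@hat_coef k n A m) /gh (@mmap_comp n _ _ _ io (horner_morph (@cfu k n A m)) (yv B m) f) (@main_lemma k n char0 _ AB0 m) //.
apply: (@eqm_mmap _ n _ _ _ _ _ m f _ _ m (leqnn m)).
  by move=> c /=; apply: g_io.
move=> l; exact: (@g_yB k n A B m l).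
Qed.
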